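(* Let $\mathcal{B}=(T,\bowtie,\ell)$ be a block and $\mathcal S$ any valid schedule of $\mathcal{B}$. Then there exists a legal partition $(B_1,\dots,B_k)$ of $T$ such that the schedule $\mathcal S'=\mathrm{LevelSchedule}(B_1,\dots,B_k)$ is equivalent to $\mathcal S$ and $\mathrm{Lt}_\ell(\mathcal S')\le \mathrm{Lt}_\ell(\mathcal S)$.
   Context: A block consists of a finite set $T$ of transactions, a conflict relation $\bowtie$, and a length function $\ell:T\to\mathbb{N}_{>0}$. Each transaction is deterministic and has a read-set $R(tx)$ and a write-set $W(tx)$ of objects of a global state it may read/write; distinct $tx_1,tx_2$ conflict ($tx_1\bowtie tx_2$) if $R(tx_1)\cap W(tx_2)$, $W(tx_1)\cap R(tx_2)$ or $W(tx_1)\cap W(tx_2)$ is nonempty. A schedule is a set $\mathcal S\subseteq T\times T$ with $(T,\mathcal S)$ acyclic; it is valid if every conflicting pair is joined by a directed path in $(T,\mathcal S)$ in one direction or the other. The latency $\mathrm{Lt}_\ell(\mathcal S)$ is the maximum, over all directed simple paths $P$ of $(T,\mathcal S)$ (including single vertices), of $\sum_{v\in P}\ell(v)$. A set is conflict-free if no two of its elements conflict; a legal partition of $T$ is an ordered sequence of pairwise disjoint conflict-free sets with union $T$. $\mathrm{LevelSchedule}(B_1,\dots,B_k)$: set $B_0=\emptyset$, $\mathcal S=\emptyset$; for $i=1,\dots,k$ and, for each $i$, for $j=i-1,\dots,0$ (decreasing): let $E=\{(u,v)\in B_j\times B_i: u\bowtie v\}$, let $P$ be the set of pairs $(x,y)$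 with a directed path from $x$ to $y$ in the current $(T,\mathcal S)$, and set $\mathcal S\leftarrow\mathcal S\cup(E\setminus P)$; output $\mathcal S$. The scheduler $GBR$ executes a schedule by running each transaction $tx$ in its own thread, which waits until all $tx'$ with $(tx',tx)\in\mathcal S$ have finished, then reads the latest versions of $R(tx)$, executes, writes $W(tx)$, emits its result and signals its out-neighbours. Two schedules are equivalent if for every initial global state, all executions of $GBR$ on either schedule produce the same result for every transaction and the same final global state. *)

(* Defs.v *)
From mathcomp Require Import all_boot.
Set Implicit Arguments.
Unset Strict Implicit.
Unset Printing Implicit Defensive.

Section Block.
Variables (T : finType) (O : eqType).
(* read-set and write-set of each transaction (finite lists of objects) *)
Variables (R W : T -> seq O).

Definition conflict (x y : T) : bool :=
  (x != y) &&
  [|| has (mem (W y)) (R x), has (mem (R y)) (W x) | has (mem (W y)) (W x)].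

Definition tc (S : rel T) (x y : T) : bool :=
  [exists z, S x z && connect S z y].

Definition acyclic (S : rel T) : Prop := forall x, ~~ tc S x x.

Definition valid_schedule (S : rel T) : Prop :=
  acyclic S /\ forall x y, conflict x y -> tc S x y || tc S y x.

Definition dpath (S : rel T) (p : seq T) : bool :=
  if p is x :: q then path S x q else false.

Definition latency (ell : T -> nat) (S : rel T) : nat :=
  \max_(n < #|T|.+1)
    \max_(t : n.-tuple T | uniq t && dpath S t) \sum_(v <- t) ell v.

Definition conflict_free (A : {set T}) : Prop :=
  forall x y, x \in A -> y \in A -> ~~ conflict x y.

Definition legal_partition (Bs : seq {set T}) : Prop :=
  (forall i j, i < j -> j < size Bs -> [disjoint nth set0 Bs i & nth set0 Bs j])
  /\ (forall B, B \in Bs -> conflict_free B)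
  /\ \bigcup_(B <- Bs) B = [set: T].

Definition relS (S : {set T * T}) : rel T := fun x y => (x, y) \in S.

Definition level_step (Bj Bi : {set T}) (S : {set T * T}) : {set T * T} :=
  S :|: [set e : T * T | [&& e.1 \in Bj, e.2 \in Bi, conflict e.1 e.2
                            & ~~ tc (relS S) e.1 e.2]].

(* LevelSchedule(B_1,...,B_k), with B_0 = set0; i = 1..k, j = i-1 downto 0 *)
Definition LevelSchedule (Bs : seq {set T}) : rel T :=
  let B := nth set0 (set0 :: Bs) in
  relS (foldl (fun S i =>
            foldl (fun S j => level_step (B j) (B i) S) S (rev (iota 0 i)))
          set0 (iota 1 (size Bs))).

Variables (V Res : Type).
(* deterministic semantics: result and written values, as functions of the
   global state read at the start of the transaction *)
Variables (res : T -> (O -> V) -> Res) (upd : T -> (O -> V) -> O -> V).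

Definition tx_local : Prop :=
  forall t (s1 s2 : O -> V), (forall o, o \in R t -> s1 o = s2 o) ->
    res t s1 = res t s2 /\ (forall o, o \in W t -> upd t s1 o = upd t s2 o).

(* events: inl t = thread t starts (reads the latest versions),
           inr t = thread t finishes (writes W(t)) *)
Definition execution (S : rel T) (e : seq (T + T)) : Prop :=
  perm_eq e (enum {: T + T}) /\
  (forall t, index (inl t) e < index (inr t) e) /\
  (forall u v, S u v -> index (inr u) e < index (inl v) e).

Definition run_event (st : (O -> V) * (T -> O -> V)) (ev : T + T) :=
  let: (s, snap) := st in
  match ev with
  | inl t => (s, fun t' => if t' == t then s else snap t')
  | inr t => ((fun o => if o \in W t then upd t (snap t) o else s o), snap)
  end.

Definition run (s0 : O -> V) (e : seq (T + T)) :=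
  foldl run_event (s0, fun _ => s0) e.

Definition final_state (s0 : O -> V) e : O -> V := (run s0 e).1.
Definition result (s0 : O -> V) e (t : T) : Res := res t ((run s0 e).2 t).

Definition equivalent (S1 S2 : rel T) : Prop :=
  forall (s0 : O -> V) e1 e2,
    (execution S1 e1 \/ execution S2 e1) ->
    (execution S1 e2 \/ execution S2 e2) ->
    (forall t, result s0 e1 t = result s0 e2 t) /\
    (forall o, final_state s0 e1 o = final_state s0 e2 o).

End Block.

(* Main.v *)
Require Import Defs.
From mathcomp Require Import all_boot.
Set Implicit Arguments. Unset Strict Implicit. Unset Printing Implicit Defensive.

Section Sem.
Variables (T : finType) (O : eqType) (R W : T -> seq O) (V Res : Type)
  (res : T -> (O -> V) -> Res) (upd : T -> (O -> V) -> O -> V).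
Hypothesis Hloc : tx_local R W res upd.
Variable ord : rel T.
Hypothesis ord_trans : forall x y z, ord x y -> ord y z -> ord x z.
Hypothesis ord_irr : forall x, ~~ ord x x.
Hypothesis ord_tot : forall x y, conflict R W x y -> ord x y || ord y x.

Lemma conflict_sym x y : conflict R W x y = conflict R W y x.
Proof.
rewrite /conflict eq_sym; congr (_ && _).
by rewrite (has_sym (W y) (R x)) (has_sym (R y)) (has_sym (W y) (W x)) orbCA.
Qed.

Definition good (e : seq (T + T)) :=
  [/\ uniq e, forall x, x \in e, forall t, index (inl t) e < index (inr t) e
   & forall u v, conflict R W u v -> ord u v -> index (inr u) e < index (inl v) e].

Section Run.
Variable s0 : O -> V.
Definition stAt e k := (run W upd s0 (take k e)).1.
Definition snAt e k := (run W upd s0 (take k e)).2.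

Lemma run_take_S e k x0 : k < size e ->
  run W upd s0 (take k.+1 e) = run_event W upd (run W upd s0 (take k e)) (nth x0 e k).
Proof. by move=> Hk; rewrite /run (take_nth x0 Hk) foldl_rcons. Qed.

Section OneExec.
Variable e : seq (T + T).
Hypothesis He : good e.
Local Notation pos x := (index x e).

Lemma pos_inj x y : pos x = pos y -> x = y.
Proof.
case: He => _ Hin _ _ H.
by rewrite -(nth_index x (Hin x)) H nth_index.
Qed.

Lemma snAt_eq k t : k <= size e ->
  snAt e k t = if pos (inl t) < k then stAt e (pos (inl t)) else s0.
Proof.
have [Hu Hin _ _] := He.
elim: k => [|k IH] Hk; first by rewrite ltn0 /snAt take0.
have IHk := IH (ltnW Hk).
have Hxk : pos (nth (inl t) e k) = k := index_uniq _ Hk Hu.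
rewrite /snAt (run_take_S (inl t) Hk).
move: Hxk IHk; rewrite /snAt.
case E: (run W upd s0 (take k e)) => [s sn] /=.
case: (nth (inl t) e k) => [t'|t'] /= Hxk IHk.
  case: eqP => [->|Hne].
    by rewrite Hxk ltnSn /stAt E.
  rewrite IHk ltnS (leq_eqVlt (index (inl t) e)).
  case: eqP => // Hp.
  by case: Hne; rewrite -Hp in Hxk; case: (pos_inj Hxk).
rewrite IHk ltnS (leq_eqVlt (index (inl t) e)).
case: eqP => // Hp.
by rewrite -Hp in Hxk; have := pos_inj Hxk.
Qed.

Lemma stAt_S k x0 : k < size e -> stAt e k.+1 =
  match nth x0 e k with
  | inl _ => stAt e k
  | inr t => fun o => if o \in W t then upd t (snAt e k t) o else stAt e k o
  end.
Proof.
move=> Hk; rewrite /stAt /snAt (run_take_S x0 Hk).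
by case: (run W upd s0 (take k e)) => s sn; case: (nth x0 e k).
Qed.

Lemma stAt_writer k o : k <= size e ->
  (forall m, o \in W m -> pos (inr m) < k ->
     (forall w, o \in W w -> pos (inr w) < k -> pos (inr w) <= pos (inr m)) ->
     stAt e k o = upd m (stAt e (pos (inl m))) o)
  /\ ((forall w, o \in W w -> k <= pos (inr w)) -> stAt e k o = s0 o).
Proof.
have [Hu Hin Hlr _] := He.
elim: k => [|k IH] Hk.
  by split => // _; rewrite /stAt take0.
have [IH1 IH2] := IH (ltnW Hk).
have x0 : T + T by move: Hk; case: (e) => [|y _] //; exact: y.
have Hxk := index_uniq x0 Hk Hu.
have Hred : forall y, pos y < k.+1 -> pos y != k -> pos y < k.
  by move=> y; rewrite ltnS leq_eqVlt => /orP[->|].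
rewrite (stAt_S x0 Hk); move: Hxk; case: (nth x0 e k) => [t|t] Hxk.
  split.
    move=> m Hm Hmk Hmax; apply: IH1 => //.
      apply: Hred => //; apply/eqP => H; rewrite -Hxk in H; by have := pos_inj H.
    by move=> w Hw Hwk; apply: Hmax => //; apply: ltnW.
  by move=> Hall; apply: IH2 => w Hw; apply: ltnW; apply: Hall.
case Hot: (o \in W t).
  split.
    move=> m Hm Hmk Hmax.
    have H1 := Hmax t Hot (leq_trans (eq_leq Hxk) (leqnn _)).
    have Hmt : m = t.
      have : pos (inr m) = pos (inr t).
        by rewrite Hxk; apply/eqP; rewrite eqn_leq -ltnS Hmk -Hxk.
      by move/pos_inj => [].
    subst m; rewrite snAt_eq ?(ltnW Hk) //.
    by rewrite -Hxk Hlr.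
  by move=> Hall; have := Hall t Hot; rewrite Hxk ltnn.
split.
  move=> m Hm Hmk Hmax; apply: IH1 => //.
    apply: Hred => //; apply/eqP => H; rewrite -Hxk in H; move: (pos_inj H) => [Hmt].
    by subst m; rewrite Hm in Hot.
  by move=> w Hw Hwk; apply: Hmax => //; apply: ltnW.
by move=> Hall; apply: IH2 => w Hw; apply: ltnW; apply: Hall.
Qed.

Lemma pre_set t o w : o \in R t -> o \in W w ->
  (pos (inr w) < pos (inl t)) = ord w t.
Proof.
have [Hu Hin Hlr Hresp] := He.
move=> Hot How.
case: (eqVneq w t) => [->|Hne].
  rewrite (negbTE (ord_irr t)); apply/negbTE; rewrite -leqNgt; exact: ltnW (Hlr t).
have Hc : conflict R W w t.
  rewrite /conflict Hne /=; apply/orP; right; apply/orP; left; apply/hasP; by exists o.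
case/orP: (ord_tot Hc) => Hord.
  by rewrite Hord; exact: Hresp.
have Hc' : conflict R W t w by rewrite conflict_sym.
have H := Hresp _ _ Hc' Hord.
rewrite (_ : ord w t = false); last first.
  apply/negbTE/negP => Hwt; by move/negP: (ord_irr t); apply; apply: ord_trans Hord Hwt.
apply/negbTE; rewrite -leqNgt.
exact: ltnW (ltn_trans (Hlr t) (ltn_trans H (Hlr w))).
Qed.

Lemma ordmax_exists o (P : pred T) w0 : P w0 -> (forall w, P w -> o \in W w) ->
  exists2 m, P m & (forall w, P w -> pos (inr w) <= pos (inr m))
                /\ (forall w, P w -> w != m -> ord w m).
Proof.
have [Hu Hin Hlr Hresp] := He.
move=> Pw0 HPW.
case: (@arg_maxnP _ w0 P (fun w => pos (inr w)) Pw0) => m Pm Hmax.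
exists m => //; split => [w Pw|w Pw Hne]; first exact: Hmax w Pw.
have Hc : conflict R W w m.
  rewrite /conflict Hne /=; apply/orP; right; apply/orP; right; apply/hasP.
  by exists o; [apply: HPW | apply: HPW].
case/orP: (ord_tot Hc) => // Hmw.
have Hc' : conflict R W m w by rewrite conflict_sym.
have H := Hresp _ _ Hc' Hmw.
have H2 : pos (inr w) <= pos (inr m) := Hmax w Pw.
move: H2; rewrite leqNgt => /negP; case.
exact: ltn_trans H (Hlr w).
Qed.

End OneExec.
Lemma ord_unique (P : pred T) m1 m2 : P m1 -> P m2 ->
  (forall w, P w -> w != m1 -> ord w m1) -> (forall w, P w -> w != m2 -> ord w m2) ->
  m1 = m2.
Proof.
move=> P1 P2 H1 H2; case: (eqVneq m1 m2) => // Hne.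
have h1 := H2 m1 P1 Hne.
have h2 : ord m2 m1 by apply: H1 => //; rewrite eq_sym.
by move/negP: (ord_irr m1); case; apply: ord_trans h1 h2.
Qed.

Lemma card_pred_lt m t : ord m t -> #|[pred w | ord w m]| < #|[pred w | ord w t]|.
Proof.
move=> Hmt; apply: proper_card; apply/properP; split.
  by apply/subsetP => w; rewrite !inE => /ord_trans; apply.
by exists m; rewrite !inE // ord_irr.
Qed.

Section TwoExec.
Variables e1 e2 : seq (T + T).
Hypotheses (He1 : good e1) (He2 : good e2).

Lemma agree_snap t o : o \in R t ->
  stAt e1 (index (inl t) e1) o = stAt e2 (index (inl t) e2) o.
Proof.
suff H : forall n t, #|[pred w | ord w t]| < n -> forall o, o \in R t ->
  stAt e1 (index (inl t) e1) o = stAt e2 (index (inl t) e2) o.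
  by apply: (H _ t (ltnSn _)).
elim=> [//|n IH] {}t Hn {}o Hot.
pose P := [pred w | (o \in W w) && ord w t].
have HP : forall w, P w = (o \in W w) && ord w t by [].
have HPW : forall w, P w -> o \in W w by move=> w; rewrite HP => /andP[].
case: (pickP P) => [w0 Pw0 | Hnone].
  have [m1 Pm1 [Hmax1 Hord1]] := ordmax_exists He1 Pw0 HPW.
  have [m2 Pm2 [Hmax2 Hord2]] := ordmax_exists He2 Pw0 HPW.
  have Hm := ord_unique Pm1 Pm2 Hord1 Hord2; subst m2.
  have key : forall e, good e -> (forall w, P w -> index (inr w) e <= index (inr m1) e) ->
      stAt e (index (inl t) e) o = upd m1 (stAt e (index (inl m1) e)) o.
    move=> e He Hmax.
    case: (stAt_writer He o (index_size (inl t) e)) => [H1 _]; apply: H1.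
    - exact: HPW.
    - by rewrite (pre_set He Hot (HPW _ Pm1)); move: Pm1; rewrite HP => /andP[].
    - move=> w Hw Hwt; apply: Hmax; rewrite HP Hw /=.
      by rewrite -(pre_set He Hot Hw).
  rewrite (key e1 He1 Hmax1) (key e2 He2 Hmax2).
  have Hm1t : ord m1 t by move: Pm1; rewrite HP => /andP[].
  have Hcard : #|[pred w | ord w m1]| < n.
    by rewrite ltnS in Hn; exact: leq_trans (card_pred_lt Hm1t) Hn.
  have [_ Hupd] := Hloc (fun o' Ho' => IH m1 Hcard o' Ho').
  exact: Hupd (HPW _ Pm1).
have key : forall e, good e -> stAt e (index (inl t) e) o = s0 o.
  move=> e He.
  case: (stAt_writer He o (index_size (inl t) e)) => [_ H2]; apply: H2.
  move=> w Hw; rewrite leqNgt (pre_set He Hot Hw).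
  by have := Hnone w; rewrite HP Hw /= => ->.
by rewrite (key e1 He1) (key e2 He2).
Qed.

Lemma agree_final o : stAt e1 (size e1) o = stAt e2 (size e2) o.
Proof.
pose P := [pred w | o \in W w].
have HPW : forall w, P w -> o \in W w by [].
case: (pickP P) => [w0 Pw0 | Hnone].
  have [m1 Pm1 [Hmax1 Hord1]] := ordmax_exists He1 Pw0 HPW.
  have [m2 Pm2 [Hmax2 Hord2]] := ordmax_exists He2 Pw0 HPW.
  have Hm := ord_unique Pm1 Pm2 Hord1 Hord2; subst m2.
  have key : forall e, good e -> (forall w, P w -> index (inr w) e <= index (inr m1) e) ->
      stAt e (size e) o = upd m1 (stAt e (index (inl m1) e)) o.
    move=> e He Hmax.
    have [Hu Hin _ _] := He.
    case: (stAt_writer He o (leqnn _)) => [H1 _]; apply: H1.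
    - exact: HPW.
    - by rewrite index_mem.
    - by move=> w Hw _; apply: Hmax.
  rewrite (key e1 He1 Hmax1) (key e2 He2 Hmax2).
  have [_ Hupd] := Hloc (fun o' (Ho' : o' \in R m1) => agree_snap Ho').
  exact: Hupd (HPW _ Pm1).
have key : forall e, good e -> stAt e (size e) o = s0 o.
  move=> e He.
  case: (stAt_writer He o (leqnn _)) => [_ H2]; apply: H2.
  by move=> w Hw; have := Hnone w; rewrite /= Hw.
by rewrite (key e1 He1) (key e2 He2).
Qed.

Lemma agree_res t : res t (snAt e1 (size e1) t) = res t (snAt e2 (size e2) t).
Proof.
have [_ Hin1 _ _] := He1; have [_ Hin2 _ _] := He2.
rewrite (snAt_eq He1 _ (leqnn _)) (snAt_eq He2 _ (leqnn _)) !index_mem Hin1 Hin2.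
have [Hr _] := Hloc (fun o' (Ho' : o' \in R t) => agree_snap Ho').
exact: Hr.
Qed.

End TwoExec.
End Run.

Lemma equiv_good S1 S2 : (forall e, execution S1 e -> good e) ->
  (forall e, execution S2 e -> good e) -> equivalent W res upd S1 S2.
Proof.
move=> G1 G2 s0 e1 e2 H1 H2.
have Hg1 : good e1 by case: H1; [apply: G1 | apply: G2].
have Hg2 : good e2 by case: H2; [apply: G1 | apply: G2].
split.
  move=> t; rewrite /result.
  have := agree_res s0 Hg1 Hg2 t.
  by rewrite /snAt !take_size.
move=> o; rewrite /final_state.
have := agree_final s0 Hg1 Hg2 o.
by rewrite /stAt !take_size.
Qed.

End Sem.

Lemma foldl_inv (A B : Type) (f : A -> B -> A) (I : A -> Prop) (l : seq B) s :
  I s -> (forall a b, I a -> I (f a b)) -> I (foldl f s l).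
Proof. by elim: l s => //= b l IH s Hs Hf; apply: IH => //; apply: Hf. Qed.

Lemma foldl_inv_mem (A : Type) (B : eqType) (f : A -> B -> A) (I : A -> Prop) (l : seq B) s :
  I s -> (forall a b, b \in l -> I a -> I (f a b)) -> I (foldl f s l).
Proof.
elim: l s => //= b l IH s Hs Hf; apply: IH.
  by apply: Hf => //; rewrite inE eqxx.
by move=> a c Hc; apply: Hf; rewrite inE Hc orbT.
Qed.

Lemma foldl_reach (A : Type) (B : eqType) (f : A -> B -> A) (P : A -> Prop) (l : seq B) s b :
  b \in l -> (forall a, P (f a b)) -> (forall a c, P a -> P (f a c)) -> P (foldl f s l).
Proof.
elim: l s => //= c l IH s; rewrite inE => /orP[/eqP <-|Hb] H1 H2.
  by apply: foldl_inv => //.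
exact: IH.
Qed.

Section Sched.
Variables (T : finType) (O : eqType) (R W : T -> seq O) (S : rel T).
Hypothesis HS : valid_schedule R W S.

Lemma tc_connect (E : rel T) x y : tc E x y -> connect E x y.
Proof.
case/existsP => z /andP[Hxz Hzy].
exact: connect_trans (connect1 Hxz) Hzy.
Qed.

Lemma tc_intro (E : rel T) x z y : E x z -> connect E z y -> tc E x y.
Proof. by move=> H1 H2; apply/existsP; exists z; rewrite H1. Qed.

Lemma tc_trans (E : rel T) x y z : tc E x y -> tc E y z -> tc E x z.
Proof.
case/existsP => w /andP[Hxw Hwy] Hyz.
apply: (tc_intro Hxw); exact: connect_trans Hwy (tc_connect Hyz).
Qed.

Lemma tc_mono (E1 E2 : rel T) x y : (forall a b, E1 a b -> E2 a b) -> tc E1 x y -> tc E2 x y.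
Proof.
move=> H /existsP[z /andP[Hxz Hzy]].
apply: (tc_intro (H _ _ Hxz)).
apply: (connect_sub _ Hzy) => a b Hab; apply: connect1; exact: H.
Qed.

Lemma path_tc (E : rel T) x p y : path E x p -> y \in p -> tc E x y.
Proof.
elim: p x => //= z p IH x /andP[Hxz Hp]; rewrite inE => /orP[/eqP ->|Hy].
  exact: tc_intro Hxz (connect0 _ _).
exact: tc_intro Hxz (tc_connect (IH _ Hp Hy)).
Qed.

Lemma path_uniq (E : rel T) x p : acyclic E -> path E x p -> uniq (x :: p).
Proof.
move=> Hac; elim: p x => //= z p IH x /andP[Hxz Hp].
have := IH _ Hp => /= ->; rewrite andbT.
apply/negP => Hx.
have H1 : tc E x x.
  rewrite inE in Hx; case/orP: Hx => [/eqP Hxz'|Hx].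
    by subst z; exact: tc_intro Hxz (connect0 _ _).
  exact: tc_intro Hxz (tc_connect (path_tc Hp Hx)).
by move/negP: (Hac x).
Qed.

Let ord := tc S.

Lemma ord_irr x : ~~ ord x x.
Proof. by case: HS => H _; apply: H. Qed.

Lemma ord_tot x y : conflict R W x y -> ord x y || ord y x.
Proof. by case: HS => _ H; apply: H. Qed.

Lemma ord_trans' x y z : ord x y -> ord y z -> ord x z.
Proof. exact: tc_trans. Qed.

Definition rank t := #|[pred w | ord w t]|.

Lemma rank_lt x y : ord x y -> rank x < rank y.
Proof. exact: (card_pred_lt ord_trans' ord_irr). Qed.

Lemma rank_bound t : rank t < #|T|.
Proof.
have H := max_card [predU1 t & [pred w | ord w t]].
rewrite cardU1 inE /= (negbTE (ord_irr t)) add1n in H.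
exact: H.
Qed.

Definition Bs := mkseq (fun i => [set t | rank t == i]) #|T|.
Definition Bf := nth set0 (set0 :: Bs).

Lemma mem_Bf x j : x \in Bf j -> j = (rank x).+1.
Proof.
rewrite /Bf; case: j => [|j] /=; first by rewrite inE.
case: (ltnP j #|T|) => Hj.
  by rewrite /Bs nth_mkseq // inE => /eqP ->.
by rewrite nth_default ?inE // size_mkseq.
Qed.

Lemma Bf_mem x : x \in Bf (rank x).+1.
Proof. by rewrite /Bf /= /Bs nth_mkseq ?rank_bound // inE. Qed.

Lemma legal : legal_partition R W Bs.
Proof.
split; [|split].
- move=> i j Hij Hj; rewrite /Bs size_mkseq in Hj.
  rewrite !nth_mkseq //; last exact: ltn_trans Hij Hj.
  apply/pred0P => x /=; rewrite !inE.
  apply/negbTE/negP => /andP[/eqP H1 /eqP H2].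
  by move: Hij; rewrite -H1 -H2 ltnn.
- move=> B /mapP[i _ ->] x y; rewrite !inE => /eqP Hx /eqP Hy.
  apply/negP => /ord_tot /orP[] /rank_lt; by rewrite Hx Hy ltnn.
- apply/setP => x; rewrite inE.
  have : [set t | rank t == rank x] \in Bs.
    by apply/mapP; exists (rank x) => //; rewrite mem_iota add0n rank_bound.
  have : x \in [set t | rank t == rank x] by rewrite inE.
  elim: Bs => //= B l IH Hx; rewrite inE big_cons => /orP[/eqP <-|Hl].
    by rewrite inE Hx.
  by rewrite inE (IH Hx Hl) orbT.
Qed.

Definition LS := LevelSchedule R W Bs.

Lemma LS_edge x y : LS x y -> ord x y.
Proof.
rewrite /LS /LevelSchedule /=.
set I := fun Sset : {set T * T} => forall x y, (x, y) \in Sset -> ord x y.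
suff : I (foldl (fun S0 i => foldl (fun S1 j => level_step R W (Bf j) (Bf i) S1) S0
              (rev (iota 0 i))) set0 (iota 1 (size Bs))) by apply.
apply: (@foldl_inv _ _ _ I) => [u v|a i Ha]; first by rewrite inE.
apply: (@foldl_inv_mem _ _ _ I) => // a' j; rewrite mem_rev mem_iota add0n => /= Hj Ha' u v.
rewrite /level_step !inE /= => /orP[/Ha' //|/and4P[Hu Hv Hc _]].
have Hr : rank u < rank v.
  by move: Hj; rewrite (mem_Bf Hu) (mem_Bf Hv).
case/orP: (ord_tot Hc) => // /rank_lt; rewrite ltnNge => /negP; case.
exact: ltnW.
Qed.

Lemma LS_reach x y : conflict R W x y -> ord x y -> tc LS x y.
Proof.
move=> Hc Hxy.
rewrite /LS /LevelSchedule /=.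
set Q := fun Sset : {set T * T} => tc (relS Sset) x y.
have Qmono : forall a b : {set T * T}, (a \subset b) -> Q a -> Q b.
  move=> a b /subsetP Hab; apply: tc_mono => u v; exact: Hab.
have Qstep : forall (a : {set T * T}) Bj Bi, Q a -> Q (level_step R W Bj Bi a).
  by move=> a Bj Bi; apply: Qmono; apply: subsetUl.
have Hr := rank_lt Hxy.
apply: (@foldl_reach _ _ _ Q _ _ (rank y).+1).
- rewrite mem_iota /Bs size_mkseq; apply/andP; split => //; rewrite add1n ltnS; exact: rank_bound.
- move=> a; apply: (@foldl_reach _ _ _ Q _ _ (rank x).+1).
  + by rewrite mem_rev mem_iota add0n.
  + move=> a'; rewrite /Q.
    case Ht: (tc (relS a') x y); first exact: Qstep.
    apply: (tc_intro (z := y)); last exact: connect0.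
    by rewrite /relS /level_step !inE /= Hc Ht !Bf_mem orbT.
  + by move=> a' c; apply: Qstep.
- by move=> a i Ha; apply: (@foldl_inv _ _ _ Q) => // a' j; apply: Qstep.
Qed.

Lemma exec_good (S1 : rel T) e : execution S1 e ->
  (forall u v, conflict R W u v -> ord u v -> tc S1 u v) -> good R W ord e.
Proof.
case=> Hperm [Hlr Hedge] Htc.
have Hin : forall x, x \in e by move=> x; rewrite (perm_mem Hperm) mem_enum.
split => //.
- by rewrite (perm_uniq Hperm) enum_uniq.
- move=> u v Hc Huv; case/existsP: (Htc u v Hc Huv) => z /andP[Huz /connectP[p Hp ->]].
  apply: (leq_trans (Hedge _ _ Huz)).
  elim: p z Hp {Huz} => //= a p IH z /andP[Hza Hp].
  apply: leq_trans (IH _ Hp); exact: ltnW (ltn_trans (Hlr z) (Hedge _ _ Hza)).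
Qed.

Lemma expand x q : path LS x q -> exists p, [/\ path S x p, subseq q p & last x p = last x q].
Proof.
elim: q x => [|y q IH] x /=; first by exists [::].
case/andP => Hxy Hq.
have [p' [Hp' Hs' Hl']] := IH y Hq.
case/existsP: (LS_edge Hxy) => z /andP[Hxz /connectP[r Hr Hy]].
exists (z :: r ++ p'); split.
- by rewrite /= Hxz cat_path Hr -Hy Hp'.
- have -> : z :: r ++ p' = belast z r ++ y :: p' by rewrite -cat_cons lastI -Hy cat_rcons.
  by apply: subseq_trans (suffix_subseq _ _); rewrite /= eqxx.
- by rewrite /= last_cat -Hy Hl'.
Qed.

Lemma lat (ell : T -> nat) : latency ell LS <= latency ell S.
Proof.
have Hac : acyclic S by case: HS.
apply/bigmax_leqP => n _; apply/bigmax_leqP => t /andP[Hu].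
rewrite /dpath; case Et: (tval t) => [|x q] // Hp.
have [p [Hp' Hs _]] := expand Hp.
have Hup := path_uniq Hac Hp'.
have Hsz : size (x :: p) < #|T|.+1.
  by rewrite ltnS -(card_uniqP Hup); exact: max_card.
have Hsum : \sum_(v <- x :: q) ell v <= \sum_(v <- x :: p) ell v.
  have Hss : subseq (x :: q) (x :: p) by rewrite /= eqxx.
  case: (perm_to_subseq Hss) => s3 Hperm.
  by rewrite (perm_big _ Hperm) big_cat leq_addr.
apply: leq_trans Hsum _.
rewrite /latency.
apply: leq_trans (leq_bigmax (Ordinal Hsz)).
apply: (@leq_bigmax_cond _ _ (fun t : (size (x::p)).-tuple T => \sum_(v <- t) ell v) (in_tuple (x :: p))).
by rewrite Hup /= Hp'.
Qed.

End Sched.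

Unset Implicit Arguments.
Theorem theorem3 (T : finType) (O : eqType) (R W : T -> seq O)
  (ell : T -> nat) (ell_pos : forall t, 0 < ell t)
  (V Res : Type) (res : T -> (O -> V) -> Res) (upd : T -> (O -> V) -> O -> V)
  (Hloc : tx_local R W res upd)
  (S : rel T) (HS : valid_schedule R W S) :
  exists Bs : seq {set T},
    legal_partition R W Bs /\
    equivalent W res upd S (LevelSchedule R W Bs) /\
    latency ell (LevelSchedule R W Bs) <= latency ell S.
Proof.
exists (Bs S).
split; first exact: legal HS.
split; last exact: lat HS ell.
apply: (@equiv_good _ _ _ _ _ _ _ _ Hloc (tc S)).
- by move=> x y z; apply: tc_trans.
- exact: ord_irr HS.
- exact: ord_tot HS.
- by move=> e He; apply: (exec_good He).
- move=> e He; apply: (exec_good He) => u v Hc H; exact: LS_reach.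
Qed.
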